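(* For every $n\ge1$, letting $k_n=\lceil\log_2 n\rceil$, $$c_n=\sum_{j=1}^{k_n-1}2^j\, s(2^{-j}n),$$ where $s(x)=\min_{z\in\mathbb{Z}}|x-z|$ is the distance from $x\in\mathbb{R}$ to the nearest integer.
   Context: Bifurcating trees: rooted trees in which every internal node has exactly two children; $\mathcal{T}_n$ is the set of isomorphism classes of bifurcating trees with $n$ leaves. For a node $w$, $\kappa_T(w)$ is its number of descendant leaves. The Colless index is $\mathcal{C}(T)=\sum_{v}|\kappa_T(v_1)-\kappa_T(v_2)|$, summed over internal nodes $v$ with children $v_1,v_2$; $c_n=\min\{\mathcal{C}(T):T\in\mathcal{T}_n\}$. *)

(* Defs.v *)
From mathcomp Require Import all_boot all_order all_algebra.
Set Implicit Arguments. Unset Strict Implicit. Unset Printing Implicit Defensive.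
Import Order.TTheory GRing.Theory Num.Theory.

Inductive btree : Type := Leaf | Node of btree & btree.

Fixpoint leaves (T : btree) : nat :=
  match T with Leaf => 1 | Node l r => leaves l + leaves r end.

Fixpoint colless (T : btree) : nat :=
  match T with
  | Leaf => 0
  | Node l r => absz (Posz (leaves l) - Posz (leaves r))%R + colless l + colless r
  end.

Definition is_min_colless (n c : nat) : Prop :=
  (exists T, leaves T = n /\ colless T = c) /\
  (forall T, leaves T = n -> c <= colless T).

Local Open Scope ring_scope.

(* s(x) = min_{z in Z} |x - z|, the distance to the nearest integer
   (nearest integers are floor x and floor x + 1). *)
Definition dist_int (x : rat) : rat :=
  Num.min (x - (Num.floor x)%:~R) (((Num.floor x) + 1)%:~R - x).

(* sum_{j=1}^{k_n - 1} 2^j s(2^{-j} n), with k_n = ceil(log2 n) = up_log 2 n. *)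
Definition colless_formula (n : nat) : rat :=
  \sum_(1 <= j < up_log 2 n) (2 ^+ j) * dist_int (n%:R / 2 ^+ j).

(* Main.v *)
Require Import Defs.
From mathcomp Require Import all_boot all_order all_algebra.
From mathcomp Require Import zify ring lra.
Import Order.TTheory GRing.Theory Num.Theory.

Definition g (j n : nat) : nat := minn (n %% 2 ^ j) (2 ^ j - n %% 2 ^ j).


Definition Fn (n : nat) : nat := \sum_(1 <= j < up_log 2 n) g j n.

Lemma mod_uniq a b q r : r < b -> a = q * b + r -> a %% b = r.
Proof. by move=> hr ->; rewrite modnMDl modn_small. Qed.

Lemma g0 n : g 0 n = 0.
Proof. by rewrite /g expn0 modn1. Qed.

Lemma g_even j m : g j.+1 (2 * m) = 2 * g j m.
Proof.
rewrite /g expnS -muln_modr.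
set r := m %% 2 ^ j.
lia.
Qed.

Lemma g_odd1 m : g 1 (2 * m + 1) = 1.
Proof.
rewrite /g expn1 (@mod_uniq _ _ m 1) //; lia.
Qed.

Lemma g_odd j m : 0 < j -> g j.+1 (2 * m + 1) = g j m + g j m.+1.
Proof.
move=> j0.
have Mpos : 0 < 2 ^ j by rewrite expn_gt0.
have Mev : 2 ^ j = 2 * 2 ^ j.-1 by rewrite -expnS prednK.
rewrite /g expnS.
set M := 2 ^ j in Mpos Mev *.
have Hd := divn_eq m M.
have Hr : m %% M < M by rewrite ltn_pmod.
set q := m %/ M in Hd; set r := m %% M in Hd Hr *.
have E1 : (2 * m + 1) %% (2 * M) = 2 * r + 1.
  by apply: (@mod_uniq _ _ q); lia.
have E2 : m.+1 %% M = r.+1 \/ (m.+1 %% M = 0 /\ r.+1 = M).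
  case: (ltnP r.+1 M) => h.
    by left; apply: (@mod_uniq _ _ q); lia.
  by right; split; [apply: (@mod_uniq _ _ q.+1); lia | lia].
rewrite E1.
clearbody M q r.
case: E2 => [->|[-> Hrm]]; lia.
Qed.

Lemma Fn0 : Fn 0 = 0.
Proof. by rewrite /Fn up_log0 big_geq. Qed.

Lemma Fn1 : Fn 1 = 0.
Proof. by rewrite /Fn up_log1 big_geq. Qed.

Lemma sum_from0 (F : nat -> nat) k : F 0 = 0 ->
  \sum_(0 <= i < k) F i = \sum_(1 <= i < k) F i.
Proof.
move=> F0; case: k => [|k]; first by rewrite !big_geq.
by rewrite big_ltn // F0 add0n.
Qed.

Lemma sum_drop_last (F : nat -> nat) k : F k = 0 ->
  \sum_(1 <= i < k.+1) F i = \sum_(1 <= i < k) F i.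
Proof.
move=> Fk; case: k Fk => [|k] Fk; first by rewrite !big_geq.
by rewrite big_nat_recr //= Fk addn0.
Qed.

Lemma Fn_even x : Fn (2 * x) = 2 * Fn x.
Proof.
case: x => [|x]; first by rewrite muln0 Fn0.
rewrite /Fn up_logMp // big_add1 /=.
under eq_bigr => i _ do rewrite g_even.
by rewrite -big_distrr /= sum_from0 ?g0.
Qed.

Lemma Fn_odd x : 0 < x -> Fn (2 * x + 1) = Fn x + Fn x.+1 + 1.
Proof.
move=> x0.
have HK : up_log 2 (2 * x + 1) = (up_log 2 x.+1).+1.
  rewrite addn1 up_log2S; last by lia.
  by rewrite (mul2n x) (doubleK x).
have K0 : 0 < up_log 2 x.+1 by rewrite up_log_gt0; lia.
rewrite /Fn HK big_ltn; last by lia.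
rewrite g_odd1 big_add1 /=.
rewrite (@eq_big_nat _ _ _ _ _ _ (fun i => g i x + g i x.+1)); last first.
  move=> i Hi; rewrite g_odd //; move: Hi; case: i => [|i] //.
rewrite big_split /=.
suff -> : \sum_(1 <= i < up_log 2 x.+1) g i x = \sum_(1 <= j < up_log 2 x) g j x by lia.
have hle : up_log 2 x <= up_log 2 x.+1 by apply: leq_up_log.
have b1 := @up_logP 2 x isT.
have x1 : 1 < x.+1 by [].
have b2 := @up_log_gtn 2 x.+1 isT x1.
set k := up_log 2 x in hle b1 *; set K := up_log 2 x.+1 in hle b2 K0 *.
case: (ltnP k K) => h; last by have -> : K = k by lia.
have hK : K.-1 <= k.
  by rewrite -(@leq_exp2l 2) //; apply: leq_trans b1; rewrite -ltnS.
have -> : K = k.+1 by lia.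
apply: sum_drop_last.
have -> : x = 2 ^ k.
  apply/eqP; rewrite eqn_leq b1 /=.
  apply: leq_trans (_ : 2 ^ K.-1 <= x); first by rewrite leq_exp2l //; lia.
  by rewrite -ltnS.
by rewrite /g modnn min0n.
Qed.


Lemma parity a : exists x, a = 2 * x \/ a = 2 * x + 1.
Proof.
exists a./2; have := odd_double_half a.
case: (odd a) => /= E; [right|left]; rewrite -mul2n in E; lia.
Qed.

Lemma Fn_sub n : forall a b, a + b = n ->
  Fn n <= Fn a + Fn b + (a - b) + (b - a).
Proof.
elim/ltn_ind: n => n IH a b Hab.
wlog hba : a b Hab / b <= a.
  move=> W; case: (leqP b a) => h; first exact: W.
  have := W b a (ltac:(lia)) (ltnW h); lia.
have [Hb|[Hb|hb2]] : b = 0 \/ b = 1 \/ 2 <= b by lia.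
- subst b; rewrite addn0 in Hab; subst a; lia.
- subst b; have [x [Ex|Ex]] := parity a; subst a.
  + have x0 : 0 < x by lia.
    have -> : n = 2 * x + 1 by lia.
    have e1 := Fn_odd _ x0; have e2 := Fn_even x; have e3 := Fn1.
    have := IH x.+1 ltac:(lia) x 1 ltac:(lia); lia.
  + have -> : n = 2 * x.+1 by lia.
    have e2 := Fn_even x.+1; have e3 := Fn1.
    case: (posnP x) => x0.
      subst x; rewrite e2 e3; lia.
    have e1 := Fn_odd _ x0.
    have := IH x.+1 ltac:(lia) x 1 ltac:(lia); lia.
- have [x [Ex|Ex]] := parity a; have [y [Ey|Ey]] := parity b; subst a b.
  + have -> : n = 2 * (x + y) by lia.
    have e1 := Fn_even (x + y); have e2 := Fn_even x; have e3 := Fn_even y.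
    have := IH (x + y) ltac:(lia) x y erefl; lia.
  + have y0 : 0 < y by lia.
    have xy0 : 0 < x + y by lia.
    have -> : n = 2 * (x + y) + 1 by lia.
    have e1 := Fn_odd _ xy0; have e2 := Fn_even x; have e3 := Fn_odd _ y0.
    have := IH (x + y) ltac:(lia) x y erefl.
    have := IH (x + y).+1 ltac:(lia) x y.+1 ltac:(lia); lia.
  + have x0 : 0 < x by lia.
    have xy0 : 0 < x + y by lia.
    have -> : n = 2 * (x + y) + 1 by lia.
    have e1 := Fn_odd _ xy0; have e2 := Fn_odd _ x0; have e3 := Fn_even y.
    have := IH (x + y) ltac:(lia) x y erefl.
    have := IH (x + y).+1 ltac:(lia) x.+1 y ltac:(lia); lia.
  + have x0 : 0 < x by lia.
    have y0 : 0 < y by lia.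
    have -> : n = 2 * (x + y).+1 by lia.
    have e1 := Fn_even (x + y).+1; have e2 := Fn_odd _ x0; have e3 := Fn_odd _ y0.
    have := IH (x + y).+1 ltac:(lia) x.+1 y ltac:(lia).
    have := IH (x + y).+1 ltac:(lia) x y.+1 ltac:(lia); lia.
Qed.

Local Open Scope ring_scope.

Lemma dist_nat (n j : nat) : 2 ^+ j * dist_int (n%:R / 2 ^+ j) = (g j n)%:R :> rat.
Proof.
have HM : (2:rat) ^+ j = (2 ^ j)%:R by rewrite natrX.
rewrite HM /g.
set M := (2 ^ j)%N.
have Mpos : (0 < M)%N by rewrite expn_gt0.
have MposR : 0 < M%:R :> rat by rewrite ltr0n.
set q := (n %/ M)%N; set r := (n %% M)%N.
have Hr : (r < M)%N by rewrite ltn_pmod.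
have Hx : n%:R / M%:R = q%:R + r%:R / M%:R :> rat.
  rewrite {1}(divn_eq n M) natrD natrM -/q -/r. field. by rewrite lt0r_neq0.
have E : (q%:Z)%:~R = q%:R :> rat by [].
have Hfl : Num.floor (n%:R / M%:R : rat) = q%:Z.
  have h1 : 0 <= r%:R / M%:R :> rat by apply: divr_ge0.
  have h2 : r%:R / M%:R < 1 :> rat by rewrite ltr_pdivrMr // mul1r ltr_nat.
  apply: floor_def; rewrite Hx intrD /=.
  rewrite E.
  apply/andP; split; lra.
rewrite /dist_int Hfl Hx intrD /= E minr_pMr ?ltW //.
have H1 : (1%:Z)%:~R = 1 :> rat by [].
rewrite H1; clearbody M q r; clear Hfl Hx E HM.
have MR0 : M%:R != 0 :> rat by rewrite lt0r_neq0.
have hy : r%:R / M%:R * M%:R = r%:R :> rat by rewrite divfK.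
move: hy; set y := r%:R / M%:R => hy.
clearbody y.
have -> : q%:R + y - q%:R = y by rewrite addrAC subrr add0r.
have -> : q%:R + 1 - (q%:R + y) = 1 - y by rewrite [q%:R + 1]addrC addrKA.
rewrite mulrBr mulr1.
rewrite (mulrC (M%:R) y) hy.
rewrite -natrB; last exact: ltnW.
case: (leqP r (M - r)%N) => h.
  by rewrite min_l ?ler_nat.
by rewrite min_r ?ler_nat // ltnW.
Qed.

Lemma absz_dist a b : absz (Posz a - Posz b) = (a - b + (b - a))%N.
Proof.
case: (leqP b a) => h.
  rewrite subzn //=.
  have -> : (b - a = 0)%N by apply/eqP; rewrite subn_eq0.
  by rewrite addn0.
rewrite -abszN opprB subzn; last exact: ltnW.
have -> : (a - b = 0)%N by apply/eqP; rewrite subn_eq0; exact: ltnW.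
by rewrite add0n.
Qed.

Lemma colless_ge T : (Fn (leaves T) <= colless T)%N.
Proof.
elim: T => [|l IHl r IHr] /=; first by rewrite Fn1.
rewrite absz_dist.
have := @Fn_sub _ (leaves l) (leaves r) erefl; lia.
Qed.

Lemma tree_ex n : (0 < n)%N -> exists T, leaves T = n /\ colless T = Fn n.
Proof.
elim/ltn_ind: n => n IH n0.
have [x [Ex|Ex]] := parity n; subst n.
  have x0 : (0 < x)%N by lia.
  have [T [h1 h2]] := IH x ltac:(lia) x0.
  exists (Node T T) => /=; rewrite h1 h2 Fn_even absz_dist; lia.
case: (posnP x) => x0.
  by subst x; exists Leaf; rewrite Fn1.
have [T1 [h1 h2]] := IH x.+1 ltac:(lia) isT.
have [T2 [h3 h4]] := IH x ltac:(lia) x0.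
exists (Node T1 T2) => /=; rewrite h1 h2 h3 h4 Fn_odd // absz_dist; lia.
Qed.

Theorem theorem3 (n : nat) (hn : (1 <= n)%N) :
  exists c : nat, is_min_colless n c /\ (c%:R : rat) = colless_formula n.
Proof.
exists (Fn n); split; [split|].
- exact: tree_ex.
- by move=> T <-; apply: colless_ge.
- rewrite /colless_formula /Fn natr_sum; apply: eq_bigr => j _.
  by rewrite dist_nat.
Qed.
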